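(* Fix a start pose $\mathbf{p}_0$ and a CSC path type with inputs satisfying $r_1=r_3$ (e.g. the constant-speed Dubins LSL path with $v_1=v_3$, $\omega_1=\omega_3>0$, or the Dubins RSR path with $v_1=v_3$, $\omega_1=\omega_3<0$). Then every pose $\mathbf{p}_f\in\mathbb{R}^2\times[0,2\pi)$ is reachable from $\mathbf{p}_0$ by that CSC path type.
   Context: A pose is $\mathbf{p}=(x,y,\theta)$, heading understood modulo $2\pi$. An input is $\mathbf{u}=(v,\omega)$ with $v>0$. The motion primitive $\mathrm{M}_{\mathbf{u},\tau}$ maps $(x,y,\theta)$ to: if $\omega\neq0$, $\big(x-\frac{v}{\omega}(\sin\theta-\sin(\theta+\omega\tau)),\ y+\frac{v}{\omega}(\cos\theta-\cos(\theta+\omega\tau)),\ \theta+\omega\tau\big)$; if $\omega=0$, $(x+v\tau\cos\theta,\ y+v\tau\sin\theta,\ \theta)$. A CSC path uses inputs $\mathbf{u}_1,\mathbf{u}_2,\mathbf{u}_3$ with $\omega_1\neq0$, $\omega_2=0$, $\omega_3\neq 0$; LSL means $\omega_1,\omega_3>0$ and RSR means $\omega_1,\omega_3<0$. For fixed inputs, $\mathbf{p}_f$ is reachable from $\mathbf{p}_0$ if there exist $\tau_1,\tau_2,\tau_3\ge0$, with $|\omega_i\tau_i|<2\pi$ for turning segments, such that $\mathrm{M}_{\mathbf{u}_3,\tau_3}(\mathrm{M}_{\mathbf{u}_2,\tau_2}(\mathrm{M}_{\mathbf{u}_1,\tau_1}(\mathbf{p}_0)))$ has position $(x_f,y_f)$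 and heading congruent to $\theta_f$ modulo $2\pi$. Notation: $r_i=v_i/\omega_i$. *)

(* Defs.v *)
From Stdlib Require Import Reals Lra.
Open Scope R_scope.

(* A pose (x, y, theta); heading understood modulo 2*PI. *)
Record pose := Pose { px : R; py : R; pth : R }.

Record input := Input { iv : R; iom : R }.

Definition motion (u : input) (tau : R) (p : pose) : pose :=
  let v := iv u in let w := iom u in
  let x := px p in let y := py p in let th := pth p in
  if Req_EM_T w 0 then
    Pose (x + v * tau * cos th) (y + v * tau * sin th) th
  else
    Pose (x - v / w * (sin th - sin (th + w * tau)))
         (y + v / w * (cos th - cos (th + w * tau)))
         (th + w * tau).

Definition heading_congr (a b : R) : Prop :=
  exists k : Z, a = b + 2 * PI * IZR k.

Definition CSC_inputs (u1 u2 u3 : input) : Prop :=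
  0 < iv u1 /\ 0 < iv u2 /\ 0 < iv u3 /\
  iom u1 <> 0 /\ iom u2 = 0 /\ iom u3 <> 0.

Definition radius (u : input) : R := iv u / iom u.

Definition CSC_reachable (u1 u2 u3 : input) (p0 pf : pose) : Prop :=
  exists tau1 tau2 tau3 : R,
    0 <= tau1 /\ 0 <= tau2 /\ 0 <= tau3 /\
    Rabs (iom u1 * tau1) < 2 * PI /\ Rabs (iom u3 * tau3) < 2 * PI /\
    let q := motion u3 tau3 (motion u2 tau2 (motion u1 tau1 p0)) in
    px q = px pf /\ py q = py pf /\ heading_congr (pth q) (pth pf).

(* Main.v *)
Require Import Defs.
From Stdlib Require Import Reals Lra Lia ZArith ArithProp.
Open Scope R_scope.

Lemma per_nat (x : R) (n : nat) :
  cos (x + 2 * PI * INR n) = cos x /\ sin (x + 2 * PI * INR n) = sin x.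
Proof.
  replace (x + 2 * PI * INR n) with (x + 2 * INR n * PI) by ring.
  split; [apply cos_period | apply sin_period].
Qed.

Lemma per (x : R) (k : Z) :
  cos (x + 2 * PI * IZR k) = cos x /\ sin (x + 2 * PI * IZR k) = sin x.
Proof.
  destruct (Z_le_gt_dec 0 k) as [H|H].
  - replace k with (Z.of_nat (Z.to_nat k)) by lia.
    rewrite <- INR_IZR_INZ. apply per_nat.
  - replace k with (- Z.of_nat (Z.to_nat (- k)))%Z by lia.
    rewrite opp_IZR, <- INR_IZR_INZ.
    set (n := Z.to_nat (-k)).
    destruct (per_nat (x + 2 * PI * - INR n) n) as [A B].
    replace (x + 2 * PI * - INR n + 2 * PI * INR n) with x in A, B by ring.
    split; symmetry; assumption.
Qed.

Lemma reduce (w psi : R) : w <> 0 ->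
  exists tau k, 0 <= tau /\ Rabs (w * tau) < 2 * PI /\ w * tau = psi + 2 * PI * IZR k.
Proof.
  intros Hw.
  assert (HP : 0 < 2 * PI) by (pose proof PI_RGT_0; lra).
  destruct (Rlt_or_le 0 w) as [Hp|Hn].
  - destruct (euclidian_division psi (2 * PI)) as [k [r [E B]]]; [lra|].
    rewrite Rabs_right in B by lra.
    exists (r / w), (- k)%Z. rewrite opp_IZR.
    replace (w * (r / w)) with r by (field; lra).
    split; [unfold Rdiv; apply Rmult_le_pos; [lra| left; apply Rinv_0_lt_compat; lra]|].
    rewrite Rabs_right by lra. split; [lra|]. rewrite E; ring.
  - assert (Hn' : w < 0) by lra.
    destruct (euclidian_division (- psi) (2 * PI)) as [k [r [E B]]]; [lra|].
    rewrite Rabs_right in B by lra.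
    exists (- r / w), k.
    replace (w * (- r / w)) with (- r) by (field; lra).
    split.
    + unfold Rdiv. replace (- r * / w) with (r * / (- w)) by (field; lra).
      apply Rmult_le_pos; [lra|]. left; apply Rinv_0_lt_compat; lra.
    + rewrite Rabs_left1 by lra. split; [lra|]. lra.
Qed.

Lemma angle (a b : R) : exists phi,
  a = sqrt (a * a + b * b) * cos phi /\ b = sqrt (a * a + b * b) * sin phi.
Proof.
  set (s := sqrt (a * a + b * b)).
  assert (Hs2 : s * s = a * a + b * b) by (apply sqrt_sqrt; nra).
  assert (Hs0 : 0 <= s) by apply sqrt_pos.
  destruct (Req_dec s 0) as [Z0|NZ].
  - exists 0. rewrite Z0 in Hs2 |- *. split; nra.
  - assert (Hsp : 0 < s) by lra.
    set (x := a / s).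
    assert (Hx : -1 <= x <= 1).
    { unfold x. split.
      - apply (Rmult_le_reg_r s); [lra|]. unfold Rdiv; rewrite Rmult_assoc, Rinv_l by lra. nra.
      - apply (Rmult_le_reg_r s); [lra|]. unfold Rdiv; rewrite Rmult_assoc, Rinv_l by lra. nra. }
    assert (Hsq : sqrt (1 - x * x) = Rabs b / s).
    { apply sqrt_lem_1.
      - nra.
      - unfold Rdiv; apply Rmult_le_pos; [apply Rabs_pos| left; apply Rinv_0_lt_compat; lra].
      - assert (HB : Rabs b * Rabs b = b * b) by (rewrite <- Rabs_mult; apply Rabs_right; nra).
        replace (Rabs b / s * (Rabs b / s)) with (Rabs b * Rabs b / (s * s)) by (field; lra).
        rewrite HB. replace (b * b) with (s * s - a * a) by lra. unfold x. field; lra. }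
    assert (Hax : a = s * x) by (unfold x; field; lra).
    destruct (Rle_or_lt 0 b) as [Hb|Hb].
    + exists (acos x). rewrite cos_acos by lra. rewrite sin_acos by lra.
      unfold Rsqr. rewrite Hsq, Rabs_right by lra. split; [exact Hax| field; lra].
    + exists (- acos x). rewrite cos_neg, sin_neg, cos_acos by lra. rewrite sin_acos by lra.
      unfold Rsqr. rewrite Hsq, Rabs_left by lra. split; [exact Hax| field; lra].
Qed.

Theorem mainTheorem6 (u1 u2 u3 : input) (p0 : pose) :
  CSC_inputs u1 u2 u3 ->
  radius u1 = radius u3 ->
  forall pf : pose, 0 <= pth pf < 2 * PI ->
  CSC_reachable u1 u2 u3 p0 pf.
Proof.
  intros [Hv1 [Hv2 [Hv3 [Hw1 [Hw2 Hw3]]]]] Hr pf _.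
  destruct u1 as [v1 w1], u2 as [v2 w2], u3 as [v3 w3], p0 as [x0 y0 t0], pf as [xf yf tf].
  unfold radius in Hr; simpl in *. subst w2.
  set (r := v1 / w1).
  set (Dx := (xf - r * sin tf) - (x0 - r * sin t0)).
  set (Dy := (yf + r * cos tf) - (y0 + r * cos t0)).
  destruct (angle Dx Dy) as [phi [Ex Ey]].
  set (d := sqrt (Dx * Dx + Dy * Dy)) in *.
  assert (Hd : 0 <= d) by apply sqrt_pos.
  destruct (reduce w1 (phi - t0) Hw1) as [t1 [k1 [H1a [H1b H1c]]]].
  destruct (reduce w3 (tf - t0 - w1 * t1) Hw3) as [t3 [k3 [H3a [H3b H3c]]]].
  exists t1, (d / v2), t3.
  split; [exact H1a|]. split.
  { unfold Rdiv; apply Rmult_le_pos; [lra| left; apply Rinv_0_lt_compat; lra]. }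
  split; [exact H3a|]. split; [exact H1b|]. split; [exact H3b|].
  unfold motion; simpl.
  destruct (Req_EM_T w1 0) as [E|_]; [contradiction|].
  destruct (Req_EM_T 0 0) as [_|E]; [|congruence].
  destruct (Req_EM_T w3 0) as [E|_]; [contradiction|].
  simpl.
  assert (Th1 : t0 + w1 * t1 = phi + 2 * PI * IZR k1) by lra.
  assert (Th3 : t0 + w1 * t1 + w3 * t3 = tf + 2 * PI * IZR k3) by lra.
  rewrite Th3. rewrite Th1.
  destruct (per phi k1) as [C1 S1]. destruct (per tf k3) as [C3 S3].
  rewrite C1, S1, C3, S3.
  replace (v3 / w3) with r by (unfold r; lra).
  replace (v2 * (d / v2)) with d by (field; lra).
  split; [| split].
  - fold r. unfold Dx in Ex. lra.
  - fold r. unfold Dy in Ey. lra.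
  - exists k3. reflexivity.
Qed.
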